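(* For every integer $N>0$, \[\mathcal{F}_{(1)}(w_1,\dots,w_N)=\alpha^{N-1}\sum_{k=1}^N\frac{(1-q)^2w_k}{(1-w_k)(1-qw_k)}.\]
   Context: $q>0$, $q\ne1$, $\alpha\ge0$. $\mathcal{B}_N$ is the group of signed permutations of $\{1,\dots,N\}$ acting by $\sigma(f(w_1,\dots,w_N))=f(w_{\sigma(1)},\dots,w_{\sigma(N)})$ with $w_{-k}:=1/(qw_k)$. With $V_k=\frac{q^{\binom{k}{2}}(1-q)^k}{\prod_{i=1}^k(1-q^i)(1+q^{i-1})}$ and $\varphi_1(w)=\frac{1-q-\alpha+\alpha w}{1-qw^2}\frac{(1-q)w}{1-w}$, the function indexed by the one-particle configuration $(1)$ is \[\mathcal{F}_{(1)}(w_1,\dots,w_N)=V_{N-1}\alpha^{N-1}\sum_{\sigma\in\mathcal{B}_N}\sigma\!\left(\prod_{1\le i<j\le N}\left[\frac{w_i-qw_j}{w_i-w_j}\frac{1-w_iw_j}{1-qw_iw_j}\right]\varphi_1(w_1)\right).\] *)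

(* Defs.v *)
From HB Require Import structures.
From mathcomp Require Import all_boot all_order all_algebra all_fingroup.
Set Implicit Arguments. Unset Strict Implicit. Unset Printing Implicit Defensive.
Import Order.TTheory GRing.Theory Num.Theory.
Local Open Scope ring_scope.

(* A signed permutation sigma of {1..N} is encoded by a pair (s, e) with
   s : 'S_N and e : {ffun 'I_N -> bool}:  sigma(i) = - s(i) if e i, else s(i).
   This is a bijection between 'S_N * {ffun 'I_N -> bool} and B_N.
   The action sigma(f)(w) = f(w_{sigma(1)},...,w_{sigma(N)}) with
   w_{-k} = 1/(q w_k) evaluates f at the point [sperm_apply q s e w]. *)
Definition sperm_apply (R : fieldType) (N : nat) (q : R) (s : 'S_N)
  (e : {ffun 'I_N -> bool}) (w : 'I_N -> R) : 'I_N -> R :=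
  fun i => if e i then (q * w (s i))^-1 else w (s i).

Definition pair_factor (R : fieldType) (q a b : R) : R :=
  (a - q * b) / (a - b) * ((1 - a * b) / (1 - q * a * b)).

Definition phi1 (R : fieldType) (q alpha x : R) : R :=
  (1 - q - alpha + alpha * x) / (1 - q * x ^+ 2) * ((1 - q) * x / (1 - x)).

Definition Vk (R : fieldType) (q : R) (k : nat) : R :=
  q ^+ 'C(k, 2) * (1 - q) ^+ k /
  \prod_(1 <= i < k.+1) ((1 - q ^+ i) * (1 + q ^+ (i - 1))).

(* the function inside sigma(...), evaluated at x; i0 is the first index *)
Definition F1_summand (R : fieldType) (N : nat) (q alpha : R) (i0 : 'I_N)
  (x : 'I_N -> R) : R :=
  (\prod_(i < N) \prod_(j < N | (i < j)%N) pair_factor q (x i) (x j))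
  * phi1 q alpha (x i0).

Definition F1 (R : fieldType) (N : nat) (q alpha : R) (i0 : 'I_N)
  (w : 'I_N -> R) : R :=
  Vk q (N - 1) * alpha ^+ (N - 1) *
  \sum_(s : 'S_N) \sum_(e : {ffun 'I_N -> bool})
     F1_summand q alpha i0 (sperm_apply q s e w).

(* Genericity of the point w: every denominator occurring in either side
   (for every signed permutation) is nonzero. *)
Definition generic_point (R : fieldType) (N : nat) (q : R) (w : 'I_N -> R) : Prop :=
  (forall k, w k != 0 /\ 1 - w k != 0 /\ 1 - q * w k != 0) /\
  (forall (s : 'S_N) (e : {ffun 'I_N -> bool}),
     let x := sperm_apply q s e w in
     (forall i j, i != j -> x i - x j != 0 /\ 1 - q * x i * x j != 0) /\
     (forall i, 1 - x i != 0 /\ 1 - q * x i ^+ 2 != 0)).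

(* Main.v *)
Require Import Defs.
From HB Require Import structures.
From mathcomp Require Import all_boot all_order all_algebra all_fingroup.
From mathcomp Require Import ring zify.
Import Order.TTheory GRing.Theory Num.Theory.
Local Open Scope ring_scope.

Set Implicit Arguments. Unset Strict Implicit. Unset Printing Implicit Defensive.

Lemma lagrange (R : fieldType) (I : finType) (tau : I -> R) (P : {poly R}) :
  injective tau -> (size P <= #|I|)%N ->
  \sum_i P.[tau i] / \prod_(j | j != i) (tau i - tau j) = P`_(#|I|.-1).
Proof.
move=> inj sP.
pose l i := \prod_(j | j != i) ('X - (tau j)%:P).
have hl i : l i \is monic by apply: monic_prod_XsubC.
have sl i : size (l i) = #|I|.
  rewrite /l -big_filter size_prod_XsubC size_filter.
  have -> : count (fun j => j != i) (index_enum I) = #|[pred j | j != i]|.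
    by rewrite cardE /enum_mem size_filter.
  have : (0 < #|I|)%N by apply/card_gt0P; exists i.
  by rewrite cardC1; case: #|I|.
have lev i m : (l i).[tau m] = if m == i then \prod_(j | j != i) (tau i - tau j) else 0.
  rewrite /l horner_prod; case: eqP => [->|/eqP ne].
    by apply: eq_bigr => j _; rewrite hornerXsubC.
  by rewrite (bigD1 m) //= hornerXsubC subrr mul0r.
have nz i : \prod_(j | j != i) (tau i - tau j) != 0.
  by apply/prodf_neq0 => j ji; rewrite subr_eq0; apply: contra ji => /eqP/inj ->.
pose L := \sum_i (P.[tau i] / \prod_(j | j != i)(tau i - tau j)) *: l i.
have LP : L = P.
  apply/eqP; rewrite -subr_eq0; apply/negPn/negP => nzL.
  have := @max_poly_roots _ _ [seq tau i | i <- enum I] nzL.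
  rewrite size_map -cardE.
  have -> : all (root (L - P)) [seq tau i | i <- enum I].
    apply/allP => x /mapP [m _ ->]; rewrite /root hornerD hornerN /L horner_sum.
    rewrite [\sum_i _](bigD1 m) //= [\sum_(i | i != m) _]big1 => [|i im]; last by rewrite eq_sym in im; rewrite hornerZ lev (negbTE im) mulr0.
    by rewrite hornerZ lev eqxx addr0 divfK // subrr.
  rewrite map_inj_uniq // enum_uniq => /(_ isT isT).
  move=> H; suff: (size (L - P)%R <= #|I|)%N by rewrite leqNgt H.
  apply: leq_trans (size_polyD _ _) _.
  rewrite size_polyN geq_max sP andbT /L.
  apply: leq_trans; first exact: size_sum.
  apply/bigmax_leqP_seq => i _ _.
  by apply: leq_trans (size_scale_leq _ _) _; rewrite sl.
rewrite -[in RHS]LP /L coef_sum; apply: eq_bigr => i _.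
by rewrite coefZ -(sl i) -lead_coefE (monicP (hl i)) mulr1.
Qed.

Definition ep (R : fieldType) (q a : R) : {poly R} := ('X - (q * a)%:P) * (1 - a%:P * 'X).
Definition dp (R : fieldType) (q a : R) : {poly R} := ('X - a%:P) * (1 - (q * a)%:P * 'X).
Definition EA (R : fieldType) (q : R) m (w : 'I_m -> R) (A : {set 'I_m}) :=
  \prod_(j in A) ep q (w j).
Definition DA (R : fieldType) (q : R) m (w : 'I_m -> R) (A : {set 'I_m}) :=
  \prod_(j in A) dp q (w j).
Definition Qp (R : fieldType) (q : R) m (w : 'I_m -> R) (A : {set 'I_m}) :=
  (EA q w A - DA q w A) %/ ('X^2 - 1).

Lemma hep (R : fieldType) (q a t : R) : (ep q a).[t] = (t - q * a) * (1 - a * t).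
Proof. by rewrite /ep !hornerE. Qed.
Lemma hdp (R : fieldType) (q a t : R) : (dp q a).[t] = (t - a) * (1 - q * a * t).
Proof. by rewrite /dp !hornerE. Qed.

Lemma ep_dp (R : fieldType) (q a : R) :
  ep q a = dp q a + (q - 1)%:P * a%:P * ('X^2 - 1).
Proof. rewrite /ep /dp !polyCM polyCB; ring. Qed.

Lemma XX_neq0 (R : fieldType) : ('X^2 - 1 : {poly R}) != 0.
Proof. by rewrite -polyC1 monic_neq0 // monicXnsubC. Qed.

Lemma m1n1 (R : realFieldType) : (1 : R) != -1.
Proof.
have h : (-1 : R) < 1 by rewrite (@lt_trans _ _ 0) ?ltrN10 ?ltr01.
by rewrite eq_sym lt_eqF.
Qed.

Lemma dvd_ED (R : realFieldType) (q : R) m (w : 'I_m -> R) A :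
  ('X^2 - 1) %| (EA q w A - DA q w A).
Proof.
have -> : ('X^2 - 1 : {poly R}) = \prod_(z <- [:: 1; -1]) ('X - z%:P).
  by rewrite big_cons big_cons big_nil mulr1 polyCN polyC1; ring.
apply: uniq_roots_dvdp; last by rewrite uniq_rootsE /= inE andbT m1n1.
rewrite /= !andbT /root /EA /DA !hornerD !hornerN !horner_prod.
apply/andP; split; rewrite subr_eq0; apply/eqP; apply: eq_bigr => j _;
  rewrite hep hdp; ring.
Qed.

Lemma QpE (R : realFieldType) (q : R) m (w : 'I_m -> R) A :
  Qp q w A * ('X^2 - 1) = EA q w A - DA q w A.
Proof. exact: divpK (dvd_ED q w A). Qed.

Lemma Qp_rec (R : realFieldType) (q : R) m (w : 'I_m -> R) (A : {set 'I_m}) (k : 'I_m) : k \in A ->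
  Qp q w A = (q - 1)%:P * (w k)%:P * EA q w (A :\ k) + dp q (w k) * Qp q w (A :\ k).
Proof.
move=> kA; apply: (mulIf (@XX_neq0 R)); rewrite mulrDl.
rewrite -[dp q (w k) * _ * _]mulrA !QpE.
have eqA (F : 'I_m -> {poly R}) : \prod_(j in A :\ k) F j = \prod_(j in A | j != k) F j.
  by apply: eq_bigl => j; rewrite in_setD1 andbC.
rewrite /EA /DA !eqA (bigD1 k kA) [in X in _ - X](bigD1 k kA) /= ep_dp; ring.
Qed.

Lemma Qp_node (R : realFieldType) (q : R) m (w : 'I_m -> R) (A : {set 'I_m}) (k : 'I_m) t :
  k \in A -> (dp q (w k)).[t] = 0 ->
  (Qp q w A).[t] = (q - 1) * w k * \prod_(j in A :\ k) (ep q (w j)).[t].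
Proof.
move=> kA h0; rewrite (Qp_rec _ _ kA) hornerD [X in _ + X]hornerM h0 mul0r addr0 !hornerM !hornerC.
by rewrite /EA horner_prod.
Qed.

Lemma setD1_swap (T : finType) (A : {set T}) j k i :
  ((i \in A :\ j) && (i != k)) = (i \in A :\ k :\ j).
Proof. by rewrite !in_setD1; case: (i != j); case: (i != k); case: (i \in A). Qed.

Lemma Qp_one (R : realFieldType) (q : R) m (w : 'I_m -> R) (A : {set 'I_m}) :
  (Qp q w A).[1] = (q - 1) * \sum_(j in A) w j * \prod_(i in A :\ j) (dp q (w i)).[1].
Proof.
move: {2}#|A| (erefl #|A|) => n; elim: n A => [|n IH] A cA.
  move/eqP: cA; rewrite cards_eq0 => /eqP ->.
  rewrite big_set0 mulr0 /Qp /EA /DA !big_set0 subrr div0p.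
  by rewrite horner0.
have [k kA] : exists k, k \in A by apply/set0Pn; rewrite -cards_eq0 cA.
have cA' : #|A :\ k| = n by move: cA; rewrite (cardsD1 k A) kA add1n => -[].
rewrite (Qp_rec _ _ kA) hornerD [X in _ + X]hornerM IH //.
rewrite [X in X + _]hornerM [X in X * _ + _]hornerM !hornerC /EA horner_prod.
rewrite [in RHS](bigD1 k kA) /=.
have -> : \prod_(j in A :\ k) (ep q (w j)).[1] = \prod_(j in A :\ k) (dp q (w j)).[1].
  by apply: eq_bigr => j _; rewrite hep hdp; ring.
have -> : \sum_(j in A | j != k) w j * \prod_(i in A :\ j) (dp q (w i)).[1] =
   (dp q (w k)).[1] * \sum_(j in A :\ k) w j * \prod_(i in A :\ k :\ j) (dp q (w i)).[1].
  rewrite mulr_sumr; apply: eq_big => [j|j]; first by rewrite in_setD1 andbC.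
  move=> /andP [jA jk]; rewrite mulrCA; congr (_ * _).
  have kAj : k \in A :\ j by rewrite in_setD1 eq_sym jk.
  rewrite (bigD1 k kAj); congr (_ * _); apply: eq_bigl => i.
  exact: setD1_swap.
ring.
Qed.

Lemma Qp_zero (R : realFieldType) (q : R) m (w : 'I_m -> R) (A : {set 'I_m}) :
  (Qp q w A).[0] = (DA q w A).[0] - (EA q w A).[0].
Proof.
have := congr1 (fun p => p.[0]) (QpE q w A) => /=.
rewrite hornerM hornerD hornerN hornerXn -polyC1 hornerC hornerD hornerN => h.
by rewrite -opprB -h; ring.
Qed.

Lemma lin_fact (R : fieldType) (a : R) : a != 0 ->
  1 - a%:P * 'X = (-a)%:P * ('X - (a^-1)%:P).
Proof.
move=> a0; rewrite mulrBr -polyCM mulNr mulfV // !polyCN polyC1; ring.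
Qed.

Lemma ep_fact (R : fieldType) (q a : R) : a != 0 ->
  ep q a = (-a)%:P * (('X - (q * a)%:P) * ('X - (a^-1)%:P)).
Proof. by move=> a0; rewrite /ep lin_fact //; ring. Qed.

Lemma dp_fact (R : fieldType) (q a : R) : q * a != 0 ->
  dp q a = (- (q * a))%:P * (('X - a%:P) * ('X - ((q * a)^-1)%:P)).
Proof. by move=> a0; rewrite /dp lin_fact //; ring. Qed.

Lemma sl_quad (R : fieldType) (c u v : R) : c != 0 ->
  size (c%:P * (('X - u%:P) * ('X - v%:P))) = 3%N /\
  lead_coef (c%:P * (('X - u%:P) * ('X - v%:P))) = c.
Proof.
move=> c0; rewrite size_Cmul // size_mul ?polyXsubC_eq0 // !size_XsubC.
by rewrite lead_coefM lead_coefC !lead_coefM !lead_coefXsubC !mulr1.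
Qed.

Lemma sl_prod (R : fieldType) m (F : 'I_m -> {poly R}) (c : 'I_m -> R) :
  (forall j, size (F j) = 3%N /\ lead_coef (F j) = c j) ->
  size (\prod_j F j) = (2 * m).+1 /\ (\prod_j F j)`_(2 * m) = \prod_j c j.
Proof.
move=> h.
have sz : size (\prod_j F j) = (2 * m).+1.
  rewrite size_prod => [|j _]; last by rewrite -size_poly_eq0 (h j).1.
  rewrite (eq_bigr (fun _ => 3%N)) => [|j _]; last exact: (h j).1.
  rewrite sum_nat_const !card_ord.
  lia.
split=> //; rewrite -[(2 * m)%N]/((2 * m).+1.-1) -sz -lead_coefE lead_coef_prod.
by apply: eq_bigr => j _; rewrite (h j).2.
Qed.

Lemma Q_top (R : realFieldType) (q : R) m (w : 'I_m -> R) : q != 0 -> (forall j, w j != 0) ->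
  (size (Qp q w setT) <= (2 * m).-1)%N /\
  (EA q w setT - DA q w setT)`_(2 * m) = \prod_j (- w j) - \prod_j (- (q * w j)).
Proof.
move=> q0 w0.
have eT (F : 'I_m -> {poly R}) : \prod_(j in setT) F j = \prod_j F j.
  by apply: eq_bigl => j; rewrite in_setT.
have hE j : size (ep q (w j)) = 3%N /\ lead_coef (ep q (w j)) = - w j.
  by rewrite ep_fact //; apply: sl_quad; rewrite oppr_eq0.
have hD j : size (dp q (w j)) = 3%N /\ lead_coef (dp q (w j)) = - (q * w j).
  by rewrite dp_fact ?mulf_neq0 //; apply: sl_quad; rewrite oppr_eq0 mulf_neq0.
have [sE lE] := sl_prod hE.
have [sD lD] := sl_prod hD.
rewrite /EA /DA !eT coefB lE lD; split=> //.
have hs : (size (EA q w setT - DA q w setT)%R <= (2 * m).+1)%N.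
  rewrite /EA /DA !eT; apply: leq_trans (size_polyD _ _) _.
  by rewrite size_polyN sE sD maxnn.
have [->|Q0] := eqVneq (Qp q w setT) 0; first by rewrite size_poly0.
move: hs; rewrite -QpE size_mul ?XX_neq0 // -polyC1 size_XnsubC //.
rewrite addnS /= -subn1; move: (size _) => s h; lia.
Qed.

Lemma big_opt (R : Type) (idx : R) (op : Monoid.com_law idx) (T : finType)
   (P : pred (option T)) (F : option T -> R) :
  \big[op/idx]_(o | P o) F o =
  op (if P None then F None else idx) (\big[op/idx]_(x | P (Some x)) F (Some x)).
Proof.
rewrite big_mkcond (bigD1 None) //=; congr (op _ _).
rewrite (reindex_omap (@Some T) id) => [|[x|] //].
rewrite [RHS]big_mkcond; apply: eq_bigl => x /=.
by rewrite eqxx.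
Qed.

Definition yv (R : fieldType) (q : R) m (w : 'I_m -> R) (k : 'I_m) (b : bool) : R :=
  if b then (q * w k)^-1 else w k.

Definition tau_n (R : fieldType) (q : R) m (w : 'I_m -> R) (x0 : R)
  (o : option ('I_m * bool)) : R := if o is Some p then yv q w p.1 p.2 else x0.

Lemma prod_pairs (R : comNzRingType) m (F : 'I_m -> bool -> R) k b :
  \prod_(p : 'I_m * bool | p != (k, b)) F p.1 p.2 =
  F k (~~ b) * \prod_(j | j != k) (F j true * F j false).
Proof.
rewrite (bigD1 (k, ~~ b)) /=; last by rewrite xpair_eqE eqxx /=; case: b.
congr (_ * _).
rewrite (eq_bigr (fun j => \prod_(b' : bool) F j b')) => [|j _]; last by rewrite big_bool.
rewrite pair_big; apply: eq_bigl => -[j b'] /=.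
rewrite !xpair_eqE andbT.
by case: (j == k); case: b; case: b'.
Qed.

Lemma lag_nodes (R : realFieldType) (q : R) m (w : 'I_m -> R) (x0 : R) (P : {poly R}) :
  injective (tau_n q w x0) -> (size P <= (2 * m).+1)%N ->
  \sum_k \sum_b P.[yv q w k b] / ((yv q w k b - x0) * ((yv q w k b - yv q w k (~~ b)) *
        \prod_(j | j != k) ((yv q w k b - yv q w j true) * (yv q w k b - yv q w j false))))
  + P.[x0] / \prod_k ((x0 - yv q w k true) * (x0 - yv q w k false)) = P`_(2 * m).
Proof.
move=> inj sP.
have c : #|{: option ('I_m * bool)}| = (2 * m).+1.
  by rewrite card_option card_prod card_ord card_bool mulnC.
have := @lagrange R _ _ P inj; rewrite c => /(_ sP) <-.
rewrite [RHS]big_opt [RHS]addrC /=; congr (_ + _).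
  rewrite pair_big; apply: eq_big => [//|[k b] _] /=.
  rewrite big_opt /=; congr (_ / (_ * _)).
  rewrite -(prod_pairs (fun j b' => yv q w k b - yv q w j b')).
  by apply: eq_bigl => -[j b'].
rewrite big_opt /= mul1r; congr (_ / _).
rewrite -(pair_big xpredT xpredT (fun j b' => x0 - yv q w j b')) /=.
by apply: eq_bigr => j _; rewrite big_bool.
Qed.

Definition gen (R : fieldType) (q : R) m (w : 'I_m -> R) : Prop :=
  (forall k, [/\ w k != 0, 1 - w k != 0, 1 - q * w k != 0 & 1 - q * w k ^+ 2 != 0]) /\
  (forall j k, j != k -> w j - w k != 0 /\ 1 - q * w j * w k != 0).

Lemma inv_eq_prod (R : fieldType) (a b : R) : a != 0 -> a^-1 = b -> a * b = 1.
Proof. by move=> a0 <-; rewrite mulfV. Qed.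

Lemma yv_eq (R : realFieldType) (q : R) m (w : 'I_m -> R) k k' b b' :
  q != 0 -> gen q w -> yv q w k b = yv q w k' b' -> (k, b) = (k', b').
Proof.
move=> q0 [g1 g2]; rewrite /yv.
have [<-|kk] := eqVneq k k'.
  have [w0 _ _ /eqP hq] := g1 k.
  have qw0 : q * w k != 0 by rewrite mulf_neq0.
  case: b; case: b' => // h; exfalso; apply: hq.
    by have := inv_eq_prod qw0 h => e; rewrite expr2 mulrA e subrr.
  by have := inv_eq_prod qw0 (esym h) => e; rewrite expr2 mulrA e subrr.
have [/eqP d1 /eqP d2] := g2 k k' kk.
have [/eqP d3 /eqP d4] := g2 k' k (contra_neq esym kk).
have [w0 _ _ _] := g1 k; have [w0' _ _ _] := g1 k'.
have qw0 : q * w k != 0 by rewrite mulf_neq0.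
have qw0' : q * w k' != 0 by rewrite mulf_neq0.
case: b; case: b' => h; exfalso.
- apply: d1; move/(congr1 (fun x => x^-1)): h; rewrite !invrK => /(mulfI q0) ->.
  by rewrite subrr.
- first [ by apply: d2; have := inv_eq_prod qw0 h => e; rewrite e subrr
        | by apply: d4; have := inv_eq_prod qw0' (esym h) => e; rewrite e subrr].
- first [ by apply: d2; have := inv_eq_prod qw0 h => e; rewrite e subrr
        | by apply: d4; have := inv_eq_prod qw0' (esym h) => e; rewrite e subrr].
- by apply: d1; rewrite h subrr.
Qed.

Lemma tau_inj (R : realFieldType) (q : R) m (w : 'I_m -> R) x0 :
  q != 0 -> gen q w -> (forall k b, yv q w k b != x0) -> injective (tau_n q w x0).
Proof.
move=> q0 g hx [[k b]|] [[k' b']|] //= h.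
- by rewrite (yv_eq q0 g h).
- by have := hx k b; rewrite h eqxx.
- by have := hx k' b'; rewrite h eqxx.
Qed.


Lemma pair_ep_dp (R : fieldType) (q t a : R) :
  pair_factor q t a = (ep q a).[t] / (dp q a).[t].
Proof.
rewrite /pair_factor hep hdp mulf_div; congr (_ * _ / (_ * _)); ring.
Qed.

Lemma hdp_fact (R : fieldType) (q a t : R) : q * a != 0 ->
  (dp q a).[t] = - (q * a) * ((t - (q * a)^-1) * (t - a)).
Proof. rewrite mulf_eq0 negb_or => /andP[q0 a0]; by rewrite hdp; field; rewrite a0 q0. Qed.

Lemma node_dp0 (R : fieldType) (q : R) m (w : 'I_m -> R) k b :
  q * w k != 0 -> (dp q (w k)).[yv q w k b] = 0.
Proof.
move=> h; rewrite hdp /yv; case: b; last by rewrite subrr mul0r.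
by rewrite mulfV // subrr mulr0.
Qed.

Lemma summand_form (R : realFieldType) (q : R) m (w : 'I_m -> R) k t :
  q != 0 -> (forall j, w j != 0) ->
  \prod_(j | j != k) pair_factor q t (w j) =
  (\prod_(j | j != k) (ep q (w j)).[t]) /
  (\prod_(j | j != k) (- (q * w j)) *
   \prod_(j | j != k) ((t - yv q w j true) * (t - yv q w j false))).
Proof.
move=> q0 w0; rewrite (eq_bigr _ (fun j _ => pair_ep_dp q t (w j))) prodf_div.
congr (_ / _); rewrite -big_split /=; apply: eq_bigr => j _.
by rewrite hdp_fact ?mulf_neq0.
Qed.

Lemma Q_node (R : realFieldType) (q : R) m (w : 'I_m -> R) k b :
  q != 0 -> (forall j, w j != 0) ->
  (Qp q w setT).[yv q w k b] = (q - 1) * w k * \prod_(j | j != k) (ep q (w j)).[yv q w k b].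
Proof.
move=> q0 w0; rewrite (Qp_node (t := yv q w k b) (in_setT k)) ?node_dp0 ?mulf_neq0 //.
by congr (_ * _); apply: eq_bigl => j; rewrite in_setD1 in_setT andbT.
Qed.

Lemma gen_w0 (R : fieldType) (q : R) m (w : 'I_m -> R) : gen q w -> forall j, w j != 0.
Proof. by case=> g1 _ j; case: (g1 j). Qed.

Lemma Pi_neq0 (R : realFieldType) (q : R) m (w : 'I_m -> R) k b :
  q != 0 -> gen q w ->
  \prod_(j | j != k) ((yv q w k b - yv q w j true) * (yv q w k b - yv q w j false)) != 0.
Proof.
move=> q0 g; apply/prodf_neq0 => j jk; apply: mulf_neq0; rewrite subr_eq0;
  apply/eqP => /(yv_eq q0 g) [] kj _; by move: jk; rewrite kj eqxx.
Qed.

Lemma tt_neq0 (R : realFieldType) (q : R) m (w : 'I_m -> R) k b :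
  q != 0 -> gen q w -> yv q w k b - yv q w k (~~ b) != 0.
Proof.
move=> q0 g; rewrite subr_eq0; apply/eqP => /(yv_eq q0 g) [].
by case: b.
Qed.

Lemma prod_c (R : fieldType) (q : R) m (w : 'I_m -> R) :
  \prod_j (- (q * w j)) = q ^+ m * \prod_j (- w j).
Proof.
rewrite (eq_bigr (fun j => q * (- w j))) => [|j _]; last by rewrite mulrN.
by rewrite big_split /= prodr_const card_ord.
Qed.

Lemma I1 (R : realFieldType) (q : R) m (w : 'I_m -> R) : q != 0 -> q != 1 -> gen q w ->
  \sum_k \sum_b \prod_(j | j != k) pair_factor q (yv q w k b) (w j) =
  (1 - q ^+ m) * (q + q ^+ m) / ((1 - q) * q ^+ m).
Proof.
move=> q0 q1 g; have w0 := gen_w0 g.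
have q1' : 1 - q != 0 by rewrite subr_eq0 eq_sym.
have [sQ topED] := Q_top (w := w) q0 w0.
set Q := Qp q w setT in sQ *.
pose P := (1 - q) *: Q - q *: (EA q w setT - DA q w setT).
have hPt t : P.[t] = (1 - q * t ^+ 2) * Q.[t].
  rewrite /P -QpE hornerD hornerN !hornerZ hornerM hornerD hornerN hornerXn -polyC1 hornerC.
  ring.
have sP : (size P <= (2 * m).+1)%N.
  rewrite /P -QpE -/Q; apply: leq_trans (size_polyD _ _) _.
  rewrite size_polyN geq_max; apply/andP; split.
    by apply: leq_trans (size_scale_leq _ _) _; apply: leq_trans sQ _; lia.
  apply: leq_trans (size_scale_leq _ _) _.
  have [->|Q0] := eqVneq Q 0; first by rewrite mul0r size_poly0.
  apply: leq_trans (size_polyMleq _ _) _.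
  have := Q0; rewrite -size_poly_gt0.
  rewrite -polyC1 size_XnsubC //; move: sQ; move: (size Q) => s; lia.
have inj : injective (tau_n q w 0).
  apply: tau_inj => // k b; rewrite /yv; case: b.
    by rewrite invr_eq0 mulf_neq0.
  exact: w0.
have L := lag_nodes inj sP.
pose kap := - ((1 - q) * \prod_j (- (q * w j)))^-1.
have key k b : \prod_(j | j != k) pair_factor q (yv q w k b) (w j) =
   kap * (P.[yv q w k b] / ((yv q w k b - 0) * ((yv q w k b - yv q w k (~~ b)) *
        \prod_(j | j != k) ((yv q w k b - yv q w j true) * (yv q w k b - yv q w j false))))).
  rewrite summand_form // hPt /Q Q_node //.
  have hPi := Pi_neq0 k b q0 g.
  have hC : \prod_(j | j != k) (- (q * w j)) != 0.
    by apply/prodf_neq0 => j _; rewrite oppr_eq0 mulf_neq0.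
  rewrite /kap [\prod_j (- (q * w j))](bigD1 k) //=.
  move: hPi hC.
  move: (\prod_(j | j != k) ((yv q w k b - yv q w j true) * (yv q w k b - yv q w j false))) => Pi.
  move: (\prod_(j | j != k) (- (q * w j))) => C.
  move: (\prod_(j | j != k) (ep q (w j)).[yv q w k b]) => E hPi hC.
  have [wk0 _ _ hk] := g.1 k.
  have e1 : 1 + - w k * (q * w k) = 1 - q * w k ^+ 2 by ring.
  have e2 : w k * (q * w k) - 1 = - (1 - q * w k ^+ 2) by ring.
  by rewrite /yv; case: b => /=; field; rewrite ?e1 ?e2 ?oppr_eq0 wk0 q0 hPi hC q1' hk.
rewrite (eq_bigr _ (fun k _ => eq_bigr _ (fun b _ => key k b))).
under eq_bigr do rewrite -mulr_sumr.
rewrite -mulr_sumr.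
move/(canRL (addrK _)): L => ->.
have eT (F : 'I_m -> R) : \prod_(j in setT) F j = \prod_j F j.
  by apply: eq_bigl => j; rewrite in_setT.
have hD0 : (DA q w setT).[0] = \prod_j (- w j).
  rewrite /DA horner_prod eT; apply: eq_bigr => j _; rewrite hdp; ring.
have hE0 : (EA q w setT).[0] = \prod_j (- (q * w j)).
  rewrite /EA horner_prod eT; apply: eq_bigr => j _; rewrite hep; ring.
have hN : \prod_k ((0 - yv q w k true) * (0 - yv q w k false)) = q^-1 ^+ m.
  rewrite -[m in RHS]card_ord -prodr_const; apply: eq_bigr => k _.
  by rewrite /yv; field; rewrite w0 q0.
rewrite /P coefB !coefZ topED (nth_default 0 (leq_trans sQ (leq_pred _))) hPt.
rewrite /Q Qp_zero hD0 hE0 hN /kap prod_c exprVn.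
have pi0 : \prod_j (- w j) != 0 by apply/prodf_neq0 => j _; rewrite oppr_eq0.
have qm0 : q ^+ m != 0 by rewrite expf_neq0.
move: pi0 qm0; move: (\prod_j (- w j)) (q ^+ m) => pi qm pi0 qm0.
by field; rewrite pi0 qm0 q1'.
Qed.

Lemma I2 (R : realFieldType) (q al : R) m (w : 'I_m -> R) : q != 0 -> q != 1 -> gen q w ->
  \sum_k \sum_b phi1 q al (yv q w k b) * \prod_(j | j != k) pair_factor q (yv q w k b) (w j) =
  \sum_k (1 - q) ^+ 2 * w k / ((1 - w k) * (1 - q * w k)).
Proof.
move=> q0 q1 g; have w0 := gen_w0 g.
have q1' : 1 - q != 0 by rewrite subr_eq0 eq_sym.
have [sQ _] := Q_top (w := w) q0 w0.
set Q := Qp q w setT in sQ *.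
pose P := (1 - q - al) *: Q + al *: (Q * 'X).
have hPt t : P.[t] = (1 - q - al + al * t) * Q.[t].
  by rewrite /P hornerD !hornerZ hornerMX; ring.
have sP : (size P <= 2 * m)%N.
  have [Q0|Q0] := eqVneq Q 0; first by rewrite /P Q0 mul0r !scaler0 addr0 size_poly0.
  apply: leq_trans (size_polyD _ _) _; rewrite geq_max; apply/andP; split.
    by apply: leq_trans (size_scale_leq _ _) _; apply: leq_trans sQ _; lia.
  apply: leq_trans (size_scale_leq _ _) _; rewrite size_mulX //.
  have := Q0; rewrite -size_poly_gt0.
  move: sQ; move: (size Q) => s; lia.
have inj : injective (tau_n q w 1).
  apply: tau_inj => // k b; have [_ a1 a2 _] := g.1 k; rewrite /yv; case: b.
    apply: contra a2 => /eqP h; rewrite -[q * w k]invrK h invr1 subrr //.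
  by apply: contra a1 => /eqP ->; rewrite subrr.
have L := lag_nodes inj (leq_trans sP (leqnSn _)).
pose kap := (\prod_j (- (q * w j)))^-1.
have key k b : phi1 q al (yv q w k b) * \prod_(j | j != k) pair_factor q (yv q w k b) (w j) =
   kap * (P.[yv q w k b] / ((yv q w k b - 1) * ((yv q w k b - yv q w k (~~ b)) *
        \prod_(j | j != k) ((yv q w k b - yv q w j true) * (yv q w k b - yv q w j false))))).
  rewrite summand_form // hPt /Q Q_node //.
  have hPi := Pi_neq0 k b q0 g.
  have hC : \prod_(j | j != k) (- (q * w j)) != 0.
    by apply/prodf_neq0 => j _; rewrite oppr_eq0 mulf_neq0.
  rewrite /kap [\prod_j (- (q * w j))](bigD1 k) //=.
  move: hPi hC.
  move: (\prod_(j | j != k) ((yv q w k b - yv q w j true) * (yv q w k b - yv q w j false))) => Pi.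
  move: (\prod_(j | j != k) (- (q * w j))) => C.
  move: (\prod_(j | j != k) (ep q (w j)).[yv q w k b]) => E hPi hC.
  have [wk0 a1 a2 hk] := g.1 k.
  have e1 : 1 + - w k * (q * w k) = 1 - q * w k ^+ 2 by ring.
  have e2 : w k * (q * w k) - 1 = - (1 - q * w k ^+ 2) by ring.
  have e3 : 1 + -1 * (q * w k) = 1 - q * w k by ring.
  have e4 : q * w k - 1 = - (1 - q * w k) by ring.
  have e5 : q * w k ^+ 2 - 1 = - (1 - q * w k ^+ 2) by ring.
  have e6 : w k - 1 = - (1 - w k) by ring.
  by rewrite /yv /phi1; case: b => /=; field;
    rewrite ?e1 ?e2 ?e3 ?e4 ?e5 ?e6 ?oppr_eq0 wk0 q0 hPi hC ?a1 ?a2 hk.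
rewrite (eq_bigr _ (fun k _ => eq_bigr _ (fun b _ => key k b))).
under eq_bigr do rewrite -mulr_sumr.
rewrite -mulr_sumr.
move/(canRL (addrK _)): L => ->.
rewrite (nth_default 0 sP) hPt /Q Qp_one.
have d1 j : (dp q (w j)).[1] = (1 - w j) * (1 - q * w j) by rewrite hdp mulr1.
have d1n j : (dp q (w j)).[1] != 0 by have [_ a1 a2 _] := g.1 j; rewrite d1 mulf_neq0.
have hN : \prod_k ((1 - yv q w k true) * (1 - yv q w k false)) =
    \prod_k (dp q (w k)).[1] / \prod_k (- (q * w k)).
  rewrite -prodf_div; apply: eq_bigr => k _; rewrite /yv d1.
  by field; rewrite w0 q0.
have hS : \sum_(j in setT) w j * \prod_(i in setT :\ j) (dp q (w i)).[1] =
    \sum_j w j * \prod_(i | i != j) (dp q (w i)).[1].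
  rewrite (eq_bigl (fun _ => true)) => [|j]; last by rewrite in_setT.
  apply: eq_bigr => j _; congr (_ * _); apply: eq_bigl => i.
  by rewrite in_setD1 in_setT andbT.
have hR : \sum_k (1 - q) ^+ 2 * w k / ((1 - w k) * (1 - q * w k)) =
    (1 - q) ^+ 2 / \prod_j (dp q (w j)).[1] * \sum_j w j * \prod_(i | i != j) (dp q (w i)).[1].
  rewrite mulr_sumr; apply: eq_bigr => k _.
  rewrite [\prod_j _](bigD1 k) //= -d1.
  have : \prod_(i | i != k) (dp q (w i)).[1] != 0 by apply/prodf_neq0 => i _.
  move: (\prod_(i | i != k) (dp q (w i)).[1]) => Pk Pk0.
  by field; rewrite Pk0 d1n.
rewrite hN hS hR /kap.
have D0 : \prod_j (dp q (w j)).[1] != 0 by apply/prodf_neq0 => j _.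
have C0 : \prod_j (- (q * w j)) != 0 by apply/prodf_neq0 => j _; rewrite oppr_eq0 mulf_neq0.
move: D0 C0; move: (\prod_j (dp q (w j)).[1]) (\prod_j (- (q * w j))) => D C D0 C0.
by field; rewrite D0 C0.
Qed.

Definition econs n (b : bool) (e : {ffun 'I_n -> bool}) : {ffun 'I_n.+1 -> bool} :=
  [ffun i => if unlift ord0 i is Some j then e j else b].

Lemma sum_ffunS (R : nmodType) n (G : {ffun 'I_n.+1 -> bool} -> R) :
  \sum_e G e = \sum_b \sum_(e : {ffun 'I_n -> bool}) G (econs b e).
Proof.
rewrite pair_big /=.
rewrite (reindex (fun p : bool * {ffun 'I_n -> bool} => econs p.1 p.2)) //.
exists (fun e : {ffun 'I_n.+1 -> bool} => (e ord0, [ffun j => e (lift ord0 j)])) => [[b e] _ | e _] /=.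
  congr (_, _); first by rewrite /econs ffunE unlift_none.
  by apply/ffunP => j; rewrite !ffunE liftK.
apply/ffunP => i; rewrite /econs ffunE.
by case: unliftP => [j|] ->; rewrite ?ffunE.
Qed.

Lemma sum_permS (R : nmodType) n (F : 'S_n.+1 -> R) :
  \sum_s F s = \sum_(k : 'I_n.+1) \sum_(s : 'S_n) F (lift_perm ord0 k s).
Proof.
rewrite (partition_big (fun s : 'S_n.+1 => s ord0) xpredT) //=.
apply: eq_bigr => j0 _.
rewrite (reindex (lift_perm ord0 j0)); last first.
  pose ulsf i (s : 'S_n.+1) k := odflt k (unlift (s i) (s (lift i k))).
  have ulsfK i (s : 'S_n.+1) k: lift (s i) (ulsf i s k) = s (lift i k).
    rewrite /ulsf; have:= neq_lift i k.
    by rewrite -(can_eq (permK s)) => /unlift_some[] ? ? ->.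
  have inj_ulsf: injective (ulsf ord0 _).
    move=> s; apply: can_inj (ulsf (s ord0) s^-1%g) _ => k'.
    by rewrite {1}/ulsf ulsfK !permK liftK.
  exists (fun s => perm (inj_ulsf s)) => [s _ | s].
    by apply/permP=> k'; rewrite permE /ulsf lift_perm_lift lift_perm_id liftK.
  move/(s _ =P _) => si0; apply/permP=> k.
  case: (unliftP ord0 k) => [k'|] ->; rewrite ?lift_perm_id //.
  by rewrite lift_perm_lift -si0 permE ulsfK.
by apply: eq_bigl => s; rewrite lift_perm_id eqxx.
Qed.

Definition Msum (R : fieldType) (q : R) n (w : 'I_n -> R) : R :=
  \sum_(s : 'S_n) \sum_(e : {ffun 'I_n -> bool})
   \prod_(i < n) \prod_(j < n | (i < j)%N)
      pair_factor q (sperm_apply q s e w i) (sperm_apply q s e w j).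

Lemma sperm_0 (R : fieldType) (q : R) n (w : 'I_n.+1 -> R) k s b e :
  sperm_apply q (lift_perm ord0 k s) (econs b e) w ord0 = yv q w k b.
Proof. by rewrite /sperm_apply /econs ffunE unlift_none lift_perm_id. Qed.

Lemma sperm_lift (R : fieldType) (q : R) n (w : 'I_n.+1 -> R) k s b e j :
  sperm_apply q (lift_perm ord0 k s) (econs b e) w (lift ord0 j) =
  sperm_apply q s e (fun j => w (lift k j)) j.
Proof. by rewrite /sperm_apply /econs ffunE liftK lift_perm_lift. Qed.

Lemma prod_split (R : comNzRingType) n (F : 'I_n.+1 -> 'I_n.+1 -> R) :
  \prod_(i < n.+1) \prod_(j < n.+1 | (i < j)%N) F i j =
  (\prod_(j < n) F ord0 (lift ord0 j)) *
  \prod_(i < n) \prod_(j < n | (i < j)%N) F (lift ord0 i) (lift ord0 j).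
Proof.
rewrite big_ord_recl; congr (_ * _).
  by rewrite big_mkcond big_ord_recl /= mul1r.
apply: eq_bigr => i _; rewrite big_mkcond big_ord_recl /= mul1r [RHS]big_mkcond.
by apply: eq_bigr => j _.
Qed.

Lemma pair_inv (R : fieldType) (q a b : R) : q != 0 -> b != 0 -> a - b != 0 ->
  a - (q * b)^-1 != 0 -> pair_factor q a ((q * b)^-1) = pair_factor q a b.
Proof.
move=> q0 b0 h1 h2; rewrite /pair_factor.
have e1 : 1 - q * a * b != 0.
  apply: contra h2 => /eqP h.
  have e : q * b * a = 1 by rewrite -[RHS]subr0 -h; ring.
  by rewrite -[a](mulKf (mulf_neq0 q0 b0)) e mulr1 subrr.
have f1 : b - a = - (a - b) by ring.
have f2 : a * (q * b) - 1 = - (1 - q * a * b) by ring.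
by field; rewrite f1 f2 !oppr_eq0 e1 h1 b0 q0.
Qed.

Lemma prod_pair_sperm (R : fieldType) (q : R) n (w : 'I_n -> R) y s e :
  q != 0 -> (forall j, w j != 0) ->
  (forall j, y - w j != 0 /\ y - (q * w j)^-1 != 0) ->
  \prod_(j < n) pair_factor q y (sperm_apply q s e w j) = \prod_j pair_factor q y (w j).
Proof.
move=> q0 w0 hy.
rewrite [RHS](reindex_perm s); apply: eq_bigr => j _; rewrite /sperm_apply.
case: (e j) => //; have [h1 h2] := hy (s j); exact: pair_inv.
Qed.

Lemma gen_lift (R : fieldType) (q : R) n (w : 'I_n.+1 -> R) k :
  gen q w -> gen q (fun j => w (lift k j)).
Proof.
case=> g1 g2; split=> [j | j j' jj]; first exact: g1.
by apply: g2; rewrite (inj_eq lift_inj).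
Qed.

Lemma prod_lift (R : comNzRingType) n (F : 'I_n.+1 -> R) k :
  \prod_(j | j != k) F j = \prod_(j < n) F (lift k j).
Proof.
rewrite (reindex_omap (lift k) (unlift k)) => [|j jk]; last first.
  by rewrite eq_sym in jk; case: (unlift_some jk) => i ->; rewrite liftK.
by apply: eq_bigl => j; rewrite eq_sym neq_lift liftK eqxx.
Qed.

Lemma decomp (R : realFieldType) (q : R) n (w : 'I_n.+1 -> R) (g : R -> R) :
  q != 0 -> gen q w ->
  \sum_(s : 'S_n.+1) \sum_(e : {ffun 'I_n.+1 -> bool})
     (\prod_(i < n.+1) \prod_(j < n.+1 | (i < j)%N)
        pair_factor q (sperm_apply q s e w i) (sperm_apply q s e w j)) *
     g (sperm_apply q s e w ord0)
  = \sum_k \sum_b g (yv q w k b) * \prod_(j | j != k) pair_factor q (yv q w k b) (w j) *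
      Msum q (fun j => w (lift k j)).
Proof.
move=> q0 g0.
rewrite sum_permS; apply: eq_bigr => k _.
under eq_bigr do rewrite sum_ffunS.
rewrite exchange_big; apply: eq_bigr => b _.
rewrite /Msum mulr_sumr; apply: eq_bigr => s _; rewrite mulr_sumr; apply: eq_bigr => e _.
rewrite prod_split sperm_0.
have e1 : \prod_(j < n) pair_factor q (yv q w k b)
      (sperm_apply q (lift_perm ord0 k s) (econs b e) w (lift ord0 j)) =
    \prod_(j | j != k) pair_factor q (yv q w k b) (w j).
  rewrite (eq_bigr _ (fun j _ => congr1 _ (sperm_lift q w k s b e j))).
  rewrite prod_pair_sperm // ?prod_lift // => [j|j].
    exact: (gen_w0 (gen_lift k g0)).
  have hne : forall b', yv q w k b - yv q w (lift k j) b' != 0.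
    move=> b'; rewrite subr_eq0; apply/eqP => /(yv_eq q0 g0) [] kj _.
    by move: (neq_lift k j); rewrite -kj eqxx.
  by split; [exact: (hne false) | exact: (hne true)].
have e2 : \prod_(i < n) \prod_(j < n | (i < j)%N)
   pair_factor q (sperm_apply q (lift_perm ord0 k s) (econs b e) w (lift ord0 i))
                 (sperm_apply q (lift_perm ord0 k s) (econs b e) w (lift ord0 j)) =
   \prod_(i < n) \prod_(j < n | (i < j)%N)
   pair_factor q (sperm_apply q s e (fun j => w (lift k j)) i)
                 (sperm_apply q s e (fun j => w (lift k j)) j).
  by apply: eq_bigr => i _; apply: eq_bigr => j _; rewrite !sperm_lift.
rewrite e1 e2; ring.
Qed.

Lemma fac_neq0 (R : realFieldType) (q : R) i : 0 < q -> q != 1 -> (0 < i)%N ->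
  (1 - q ^+ i) * (1 + q ^+ (i - 1)) != 0.
Proof.
move=> qp q1 ip; apply: mulf_neq0.
  by rewrite subr_eq0 eq_sym pexpr_eq1 // ltW.
by rewrite gt_eqF // addr_gt0 // exprn_gt0.
Qed.

Lemma Vk_neq0 (R : realFieldType) (q : R) n : 0 < q -> q != 1 -> Vk q n != 0.
Proof.
move=> qp q1; have q0 : q != 0 by rewrite gt_eqF.
have q1' : 1 - q != 0 by rewrite subr_eq0 eq_sym.
rewrite /Vk !mulf_neq0 ?expf_neq0 // invr_eq0 prodf_seq_neq0.
apply/allP => i; rewrite mem_index_iota => /andP [i1 _]; exact: fac_neq0.
Qed.

Lemma Vk_rec (R : realFieldType) (q : R) n : 0 < q -> q != 1 ->
  Vk q n.+1 * ((1 - q ^+ n.+1) * (q + q ^+ n.+1)) = Vk q n * ((1 - q) * q ^+ n.+1).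
Proof.
move=> qp q1; have q0 : q != 0 by rewrite gt_eqF.
rewrite /Vk big_nat_recr //= binS bin1 exprD subn1 /=.
have h := fac_neq0 qp q1 (ltn0Sn n).
have hP : \prod_(1 <= i < n.+1) ((1 - q ^+ i) * (1 + q ^+ (i - 1))) != 0.
  rewrite prodf_seq_neq0; apply/allP => i; rewrite mem_index_iota => /andP [i1 _].
  exact: fac_neq0.
move: h hP; rewrite subn1 /=.
move: (\prod_(1 <= i < n.+1) ((1 - q ^+ i) * (1 + q ^+ (i - 1)))) => P h hP.
rewrite !exprS.
move: h; rewrite mulf_eq0 negb_or => /andP [h1 h2].
by field; rewrite hP h2 -exprS h1.
Qed.

Lemma Msum_val (R : realFieldType) (q : R) n (w : 'I_n -> R) :
  0 < q -> q != 1 -> gen q w -> Msum q w = (Vk q n)^-1.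
Proof.
move=> qp q1; have q0 : q != 0 by rewrite gt_eqF.
elim: n w => [|n IH] w g.
  rewrite /Msum /Vk big_geq //.
  under eq_bigr do under eq_bigr do rewrite big_ord0.
  rewrite !sumr_const card_ffun card_Sn !card_ord expn0 fact0 bin_small //.
  by rewrite !expr0 !mulr1n mulr1 divr1 invr1.
apply: etrans (etrans _ (decomp (fun _ => 1) q0 g)) _.
  by rewrite /Msum; apply: eq_bigr => s _; apply: eq_bigr => e _; rewrite mulr1.
rewrite /=.
under eq_bigr => k _ do under eq_bigr => b _ do rewrite mul1r (IH _ (gen_lift k g)).
under eq_bigr do rewrite -mulr_suml.
rewrite -mulr_suml I1 //.
have V0 := Vk_neq0 n qp q1; have V1 := Vk_neq0 n.+1 qp q1.
have E := Vk_rec n qp q1.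
have A1 : 1 - q ^+ n.+1 != 0 by rewrite subr_eq0 eq_sym pexpr_eq1 // ltW.
have A2 : q + q ^+ n.+1 != 0 by rewrite gt_eqF // addr_gt0 // exprn_gt0.
have q1' : 1 - q != 0 by rewrite subr_eq0 eq_sym.
have qn : q ^+ n.+1 != 0 by rewrite expf_neq0.
move: E V0 V1; move: (Vk q n) (Vk q n.+1) => a b E a0 b0.
have -> : a = b * ((1 - q ^+ n.+1) * (q + q ^+ n.+1)) / ((1 - q) * q ^+ n.+1).
  by rewrite E; field; rewrite q1' qn.
by field; rewrite b0 A1 A2 q1' qn.
Qed.

Lemma gp_gen (R : realFieldType) (q : R) N (w : 'I_N -> R) : generic_point q w -> gen q w.
Proof.
case=> g1 g2.
have := g2 1%g [ffun => false] => /= -[h1 h2].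
have xE i : sperm_apply q 1%g [ffun => false] w i = w i by rewrite /sperm_apply ffunE perm1.
split=> [k | j k jk].
  have [a [b c]] := g1 k; have := (h2 k).2; rewrite xE => d; by split.
by have := h1 j k jk; rewrite !xE.
Qed.


Unset Implicit Arguments. Set Strict Implicit.

Theorem lemma6p5 (R : realFieldType) (q alpha : R) (N : nat) (hN : (0 < N)%N)
  (w : 'I_N -> R) :
  0 < q -> q != 1 -> 0 <= alpha ->
  generic_point q w ->
  F1 q alpha (Ordinal hN) w =
  alpha ^+ (N - 1) *
  \sum_(k < N) ((1 - q) ^+ 2 * w k / ((1 - w k) * (1 - q * w k))).
Proof.
move=> qp q1 _ gp; have g := gp_gen gp; have q0 : q != 0 by rewrite gt_eqF.
move: hN w gp g; case: N => [//|n] hN w gp g.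
have -> : Ordinal hN = ord0 by apply: val_inj.
rewrite /F1 /F1_summand subn1 /= (decomp (phi1 q alpha) q0 g).
have hM k : Msum q (fun j => w (lift k j)) = (Vk q n)^-1 := Msum_val qp q1 (gen_lift k g).
under [in LHS]eq_bigr => k _ do under eq_bigr => b _ do rewrite hM.
under [in LHS]eq_bigr do rewrite -mulr_suml.
rewrite -mulr_suml I2 //.
have V0 := Vk_neq0 n qp q1.
move: V0; move: (Vk q n) => V V0.
by field.
Qed.
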